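(* The set of limsup functions $X \to \mathbb{R}$ is the smallest collection $\mathcal{C}$ of functions $X \to \mathbb{R}$ such that (a) $\mathcal{C}$ contains all lower semicontinuous functions $X \to \mathbb{R}$, and (b) $\mathcal{C}$ is closed under pointwise limits from above, i.e. whenever $f_0 \ge f_1 \ge \cdots$ are in $\mathcal{C}$ and converge pointwise to a function $f : X \to \mathbb{R}$, then $f \in \mathcal{C}$.
   Context: Let $A$ be a non-empty countable set and $T$ a pruned tree on $A$ (a set of finite sequences of elements of $A$, closed under initial segments, in which every sequence has a proper extension in $T$). Let $X$ be the set of infinite branches of $T$, with the topology generated by the cylinder sets $O(s) = \{x \in X : s \text{ is an initial segment of } x\}$, $s \in T$. A function $f : X \to \mathbb{R}$ is a limsup function if there exists $u : T \to \mathbb{R}$ with $f(x) = \limsup_{t\to\infty} u(x_0,\dots,x_t)$ for every $x \in X$. *)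

(* Defs.v *)
From HB Require Import structures.
From mathcomp Require Import all_boot all_order all_algebra.
From mathcomp Require Import all_classical all_reals all_analysis.
Set Implicit Arguments. Unset Strict Implicit. Unset Printing Implicit Defensive.
Import Order.TTheory GRing.Theory Num.Theory numFieldNormedType.Exports.
Local Open Scope classical_set_scope.
Local Open Scope ring_scope.

Definition prefix (A : Type) (x : nat -> A) (n : nat) : seq A := mkseq x n.

Definition is_tree (A : Type) (T : set (seq A)) : Prop :=
  forall s t : seq A, T (s ++ t) -> T s.

Definition is_pruned (A : Type) (T : set (seq A)) : Prop :=
  forall s, T s -> exists t : seq A, (0 < size t)%N /\ T (s ++ t).

(* the set X of infinite branches of T *)
Definition branch (A : Type) (T : set (seq A)) :=
  {x : nat -> A | forall n, T (prefix x n)}.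

Definition cyl (A : Type) (T : set (seq A)) (s : seq A) : set (branch T) :=
  [set x | prefix (proj1_sig x) (size s) = s].

(* open sets of the topology generated by the cylinders O(s), s in T
   (the cylinders form a base, so U is open iff it is a union of cylinders) *)
Definition cyl_open (A : Type) (T : set (seq A)) (U : set (branch T)) : Prop :=
  forall x, U x -> exists s, T s /\ @cyl A T s x /\ @cyl A T s `<=` U.

Definition lsc (A : Type) (T : set (seq A)) (R : realType)
    (f : branch T -> R) : Prop :=
  forall r : R, cyl_open [set x | r < f x].

Definition limsup_fun (A : Type) (T : set (seq A)) (R : realType)
    (f : branch T -> R) : Prop :=
  exists u : seq A -> R, forall x : branch T,
    limn_esup (fun t : nat => (u (prefix (proj1_sig x) t.+1))%:E) = (f x)%:E.

Definition closed_dec_limits (A : Type) (T : set (seq A)) (R : realType)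
    (C : set (branch T -> R)) : Prop :=
  forall (g : nat -> branch T -> R) (f : branch T -> R),
    (forall n, C (g n)) ->
    (forall n x, g n.+1 x <= g n x) ->
    (forall x, (fun n => g n x) @ \oo --> f x) ->
    C f.

(* Main.v *)
Require Import Defs.
From mathcomp Require Import all_boot all_order all_algebra.
From mathcomp Require Import all_classical all_reals all_analysis.
From mathcomp Require Import lra zify.
Import Order.TTheory GRing.Theory Num.Theory numFieldNormedType.Exports.
Local Open Scope classical_set_scope.
Local Open Scope ring_scope.
Set Implicit Arguments. Unset Strict Implicit.
Local Notation pfx := Defs.prefix.


Lemma size_pfx (A : Type) (x : nat -> A) n : size (pfx x n) = n.
Proof. by rewrite /pfx size_mkseq. Qed.

Lemma take_pfx (A : Type) (x : nat -> A) m n : (m <= n)%N -> take m (pfx x n) = pfx x m.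
Proof.
by move=> mn; rewrite /pfx /mkseq -map_take take_iota (minn_idPl mn).
Qed.

Lemma pfx_le (A : Type) (x y : nat -> A) m n : (m <= n)%N ->
  pfx y n = pfx x n -> pfx y m = pfx x m.
Proof. by move=> mn e; rewrite -(take_pfx x mn) -(take_pfx y mn) e. Qed.

Lemma cyl_open_to (A : Type) (T : set (seq A)) (U : set (branch T)) :
  cyl_open U -> forall x, U x -> exists N, forall y : branch T,
    pfx (proj1_sig y) N = pfx (proj1_sig x) N -> U y.
Proof.
move=> H x Ux; have [s [Ts [cx sU]]] := H x Ux.
exists (size s) => y e; apply: sU; rewrite /cyl /=.
by rewrite e; exact: cx.
Qed.

Lemma cyl_open_from (A : Type) (T : set (seq A)) (U : set (branch T)) :
  (forall x, U x -> exists N, forall y : branch T,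
    pfx (proj1_sig y) N = pfx (proj1_sig x) N -> U y) -> cyl_open U.
Proof.
move=> H x Ux; have [N HN] := H x Ux.
exists (pfx (proj1_sig x) N); split; first exact: (proj2_sig x N).
split; first by rewrite /cyl /= size_pfx.
by move=> y; rewrite /cyl /= size_pfx => e; apply: HN.
Qed.

Lemma lsc_min (A : Type) (T : set (seq A)) (R : realType) (f g : branch T -> R) :
  lsc f -> lsc g -> lsc (fun x => Num.min (f x) (g x)).
Proof.
move=> hf hg r; apply: cyl_open_from => x /=; rewrite lt_min => /andP[rf rg].
have [N1 H1] := cyl_open_to (hf r) rf.
have [N2 H2] := cyl_open_to (hg r) rg.
exists (maxn N1 N2) => y e; rewrite lt_min; apply/andP; split.
  by apply: H1; apply: pfx_le e; rewrite leq_maxl.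
by apply: H2; apply: pfx_le e; rewrite leq_maxr.
Qed.

Lemma near_ev (P : nat -> Prop) : (\forall n \near \oo, P n) ->
  exists N, forall n, (N <= n)%N -> P n.
Proof. by move=> [N _ H]; exists N => n Hn; apply: H. Qed.

Lemma cvg_ev (R : realType) (u : nat -> R) l : u @ \oo --> l ->
  forall e, 0 < e -> exists N, forall n, (N <= n)%N -> l - e < u n < l + e.
Proof.
move=> /cvgrPdist_lt H e e0; have [N HN] := near_ev (H e e0).
by exists N => n /HN; rewrite ltr_distlC.
Qed.

Lemma dec_mono (R : realType) (u : nat -> R) : (forall n, u n.+1 <= u n) ->
  forall i j, (i <= j)%N -> u j <= u i.
Proof.
move=> H i j ij; rewrite -(subnKC ij); elim: (j - i)%N => [|d IH].
  by rewrite addn0.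
by rewrite addnS (le_trans (H _) IH).
Qed.

Lemma dec_ge (R : realType) (u : nat -> R) l : (forall n, u n.+1 <= u n) ->
  u @ \oo --> l -> forall n, l <= u n.
Proof.
move=> H c n; rewrite leNgt; apply/negP => un.
have e0 : 0 < l - u n by rewrite subr_gt0.
have [N HN] := cvg_ev c e0.
have /andP[h _] := HN (maxn N n) (leq_maxl _ _).
have := dec_mono H (leq_maxr N n); lra.
Qed.



Lemma finite_ub (R : realType) (g : nat -> R) n : exists B, forall j, (j < n)%N -> g j <= B.
Proof.
elim: n => [|n [B HB]]; first by exists 0.
exists (Num.max B (g n)) => j; rewrite ltnS leq_eqVlt => /orP[/eqP ->|jn].
  by rewrite le_max lexx orbT.
by rewrite le_max HB.
Qed.

Lemma limsup_approx (A : Type) (T : set (seq A)) (R : realType) (f : branch T -> R) :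
  limsup_fun f -> exists h : nat -> branch T -> R,
   [/\ forall k, lsc (h k), forall k x, h k.+1 x <= h k x
     & forall x, h ^~ x @ \oo --> f x].
Proof.
move=> [u Hu].
pose v := fun x : branch T => fun t => (u (pfx (proj1_sig x) t.+1))%:E.
have infE x : ereal_inf (range (esups (v x))) = (f x)%:E.
  by rewrite -(Hu x) limn_esup_lim; apply/esym/cvg_lim => //; exact: cvg_esups_inf.
have fin x k : esups (v x) k \is a fin_num.
  have : (ereal_inf (range (esups (v x))) < (f x + 1)%:E)%E.
    by rewrite infE lte_fin ltrDl.
  move/ereal_inf_lt => [_ [n _ <-]] hn.
  have [B HB] := finite_ub (fun j => u (pfx (proj1_sig x) j.+1)) n.
  have ub : (esups (v x) k <= (Num.max B (f x + 1))%:E)%E.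
    apply: le_trans (nonincreasing_esups (v x) (leq0n k)) _.
    apply: ge_ereal_sup => _ [j _ <-].
    case: (ltnP j n) => jn; first by rewrite lee_fin le_max HB.
    have hj : (v x j <= esups (v x) n)%E by apply: ereal_sup_ubound; exists j.
    apply: (le_trans hj); apply: (le_trans (ltW hn)).
    by rewrite lee_fin le_max lexx orbT.
  have lb : (v x k <= esups (v x) k)%E.
    by apply: ereal_sup_ubound; exists k => /=.
  by move: ub lb; case: (esups (v x) k).
exists (fun k x => fine (esups (v x) k)); split.
- move=> k r; apply: cyl_open_from => x /= rx.
  have : (r%:E < esups (v x) k)%E by rewrite -(fineK (fin x k)) lte_fin.
  move/ereal_sup_gt => [_ [j /= kj <-]] rj.
  exists j.+1 => y e.
  have vyx : v y j = v x j by rewrite /v /= e.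
  have : (r%:E < esups (v y) k)%E.
    by apply: (lt_le_trans rj); rewrite -vyx; apply: ereal_sup_ubound; exists j.
  by rewrite -(fineK (fin y k)) lte_fin.
- move=> k x; apply: fine_le; try exact: fin.
  exact: nonincreasing_esups (leqnSn k).
- move=> x; have : esups (v x) @ \oo --> (f x)%:E by rewrite -infE; exact: cvg_esups_inf.
  by move/fine_cvg.
Qed.



Fixpoint mn (B : Type) (R : realType) (h : nat -> nat -> B -> R) (m k : nat) (x : B) : R :=
  if k is k'.+1 then Num.min (mn h m k' x) (h k m x) else h 0%N m x.

Lemma diag (A : Type) (T : set (seq A)) (R : realType)
  (h : nat -> nat -> branch T -> R) (g : nat -> branch T -> R) (f : branch T -> R) :
  (forall n k, lsc (h n k)) -> (forall n k x, h n k.+1 x <= h n k x) ->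
  (forall n x, h n ^~ x @ \oo --> g n x) -> (forall n x, g n.+1 x <= g n x) ->
  (forall x, g ^~ x @ \oo --> f x) ->
  exists H : nat -> branch T -> R, [/\ forall m, lsc (H m),
    forall m x, H m.+1 x <= H m x & forall x, H ^~ x @ \oo --> f x].
Proof.
move=> hl hd hc gd gc.
have mn_le m k x n : (n <= k)%N -> mn h m k x <= h n m x.
  elim: k => [|k IH]; first by rewrite leqn0 => /eqP ->.
  rewrite leq_eqVlt => /orP[/eqP -> |]; first by rewrite /= ge_min lexx orbT.
  by rewrite ltnS => /IH; rewrite /= ge_min => ->.
have fh m x n : f x <= h n m x.
  apply: le_trans (dec_ge (fun k => hd n k x) (hc n x) m).
  exact: (dec_ge (fun k => gd k x) (gc x) n).
have mn_ge m k x : f x <= mn h m k x.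
  elim: k => [|k IH] /=; first exact: fh.
  by rewrite le_min IH fh.
have mn_mono m k x : mn h m.+1 k x <= mn h m k x.
  elim: k => [|k IH] /=; first exact: hd.
  rewrite le_min !ge_min; apply/andP; split; first by rewrite IH.
  by rewrite hd orbT.
have mn_lsc m k : lsc (mn h m k).
  elim: k => [|k IH] /=; first exact: hl.
  exact: (lsc_min IH (hl k.+1 m)).
exists (fun m => mn h m m); split.
- move=> m; exact: mn_lsc.
- move=> m x /=; apply: le_trans (mn_mono m m x).
  by rewrite ge_min lexx.
- move=> x; apply/cvgrPdist_lt => e e0.
  have e2 : 0 < e / 2 by rewrite divr_gt0.
  have [n Hn] := cvg_ev (gc x) e2; have /andP[_ gn] := Hn n (leqnn n).
  have [M HM] := cvg_ev (hc n x) e2.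
  exists (maxn n M) => // m /= hm.
  have /andP[_ hn] := HM m (leq_trans (leq_maxr _ _) hm).
  have h1 := mn_le m m x n (leq_trans (leq_maxl _ _) hm).
  have h2 := mn_ge m m x.
  rewrite distrC ger0_norm ?subr_ge0 //.
  lra.
Qed.



Lemma ev_const (c : nat -> nat) (b : nat -> bool) J :
  (forall n, c n.+1 = (c n + b n)%N) -> (forall n, (c n <= J)%N) ->
  exists N, forall n, (N <= n)%N -> b n = false.
Proof.
move=> cS cJ.
have cmono i j : (i <= j)%N -> (c i <= c j)%N.
  move=> ij; rewrite -(subnKC ij); elim: (j - i)%N => [|d IH]; first by rewrite addn0.
  by rewrite addnS cS (leq_trans IH) ?leq_addr.
suff : forall k N0, (J - c N0 <= k)%N -> exists N, forall n, (N <= n)%N -> b n = false.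
  by move/(_ (J - c 0%N)%N 0%N (leqnn _)).
elim=> [|k IH] N0 hk.
  exists N0 => n hn; apply/negbTE/negP => bn.
  have := cJ n.+1; have := cmono _ _ hn; rewrite cS bn; lia.
case: (pselect (exists n, (N0 <= n)%N /\ b n)) => [[n [hn bn]]|nex].
  apply: (IH n.+1); have := cmono _ _ hn; rewrite cS bn; lia.
exists N0 => n hn; apply/negbTE/negP => bn; apply: nex; by exists n.
Qed.

Lemma fin_common (P : nat -> nat -> Prop) J :
  (forall i, (i < J)%N -> exists N, forall n, (N <= n)%N -> P i n) ->
  exists N, forall i n, (i < J)%N -> (N <= n)%N -> P i n.
Proof.
elim: J => [|J IH] H0; first by exists 0%N => i n; rewrite ltn0.
have [N1 H1] := IH (fun i hi => H0 i (leq_trans hi (leqnSn J))).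
have [N2 H2] := H0 J (ltnSn J).
exists (maxn N1 N2) => i n; rewrite ltnS leq_eqVlt => /orP[/eqP -> | hi] hn.
  by apply: H2; rewrite (leq_trans (leq_maxr _ _) hn).
by apply: H1 => //; rewrite (leq_trans (leq_maxl _ _) hn).
Qed.

Lemma inj_unbounded (g : nat -> nat) : injective g -> forall B, exists m, (B <= g m)%N.
Proof.
move=> gi B; case: (pselect (exists m, (B <= g m)%N)) => // nex; exfalso.
have hsub : {subset map g (iota 0 B.+1) <= iota 0 B}.
  move=> y /mapP [m _ ->]; rewrite mem_iota /= add0n ltnNge; apply/negP => h.
  by apply: nex; exists m.
have u : uniq (map g (iota 0 B.+1)) by rewrite map_inj_uniq // iota_uniq.
by have := uniq_leq_size u hsub; rewrite size_map !size_iota ltnn.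
Qed.

Definition sched (n : nat) : option rat := omap fst (unpickle n : option (rat * nat)).

Definition cond {A : countType} {T : set (seq A)} {R : realType} (H : nat -> branch T -> R)
  (q : rat) (k : nat) (p : seq A) : bool :=
  `[< forall y : branch T, pfx (proj1_sig y) (size p) = p -> ratr q < H k y >].

Definition hit {A : countType} {T : set (seq A)} {R : realType} (H : nat -> branch T -> R)
  (q : rat) (p : seq A) (c : nat) : bool :=
  (sched (size p) == Some q) && cond H q (pickle q + c) p.

Fixpoint cnt {A : countType} {T : set (seq A)} {R : realType} (H : nat -> branch T -> R)
  (q : rat) (s : seq A) (n : nat) : nat :=
  if n is n'.+1 then (cnt H q s n' + hit H q (take n' s) (cnt H q s n'))%N else 0%N.

Definition uK {A : countType} {T : set (seq A)} {R : realType} (H : nat -> branch T -> R)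
  (s : seq A) : R :=
  match sched (size s) with
  | Some q => if cond H q (pickle q + cnt H q s (size s)) s then ratr q else - (size s)%:R
  | None => - (size s)%:R
  end.

Lemma cnt_take {A : countType} {T : set (seq A)} {R : realType} (H : nat -> branch T -> R)
  q s m n : (n <= m)%N -> cnt H q (take m s) n = cnt H q s n.
Proof.
elim: n => [|n IH] // nm /=.
by rewrite IH ?(ltnW nm) // take_takel ?(ltnW nm).
Qed.

Definition cx {A : countType} {T : set (seq A)} {R : realType} (H : nat -> branch T -> R)
  q (x : branch T) n := cnt H q (pfx (proj1_sig x) n) n.

Lemma cxS {A : countType} {T : set (seq A)} {R : realType} (H : nat -> branch T -> R) q x n :
  cx H q x n.+1 = (cx H q x n + hit H q (pfx (proj1_sig x) n) (cx H q x n))%N.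
Proof.
have e : cnt H q (pfx (proj1_sig x) n.+1) n = cx H q x n.
  by rewrite /cx -(@cnt_take _ _ _ H q (pfx (proj1_sig x) n.+1) n n (leqnn n)) take_pfx.
by rewrite /cx /= -/(cx H q x n) e take_pfx.
Qed.

Lemma uK_pfx {A : countType} {T : set (seq A)} {R : realType} (H : nat -> branch T -> R)
  (x : branch T) n :
  uK H (pfx (proj1_sig x) n) = match sched n with
  | Some q => if cond H q (pickle q + cx H q x n) (pfx (proj1_sig x) n) then ratr q else - n%:R
  | None => - n%:R end.
Proof. by rewrite /uK size_pfx. Qed.

Lemma cond_at {A : countType} {T : set (seq A)} {R : realType} (H : nat -> branch T -> R)
  q k (x : branch T) n : cond H q k (pfx (proj1_sig x) n) -> ratr q < H k x.
Proof. by rewrite /cond => /asboolP h; apply: h; rewrite size_pfx. Qed.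



Lemma K_upper (A : countType) (T : set (seq A)) (R : realType) (H : nat -> branch T -> R)
  (f : branch T -> R) :
  (forall m x, H m.+1 x <= H m x) -> (forall x, H ^~ x @ \oo --> f x) ->
  forall x e, 0 < e -> exists N, forall n, (N <= n)%N ->
    uK H (pfx (proj1_sig x) n) <= f x + e.
Proof.
move=> hd hc x e e0.
have Hmono := dec_mono (fun m => hd m x).
have [J HJ'] := cvg_ev (hc x) e0.
have /andP[_ HJ] := HJ' J (leqnn J).
have hitc q n : f x + e <= ratr q -> hit H q (pfx (proj1_sig x) n) (cx H q x n) ->
    (pickle q + cx H q x n < J)%N.
  move=> hq /andP[_ /cond_at hr]; rewrite ltnNge; apply/negP => hJ.
  have := Hmono _ _ hJ; lra.
have bnd q : f x + e <= ratr q -> forall n, (cx H q x n <= J)%N.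
  move=> hq; elim=> [|n IH]; first by rewrite /cx.
  rewrite cxS; case hh: (hit _ _ _ _); last by rewrite addn0.
  by have := hitc q n hq hh; lia.
pose P i n := forall q, pickle q = i -> f x + e <= ratr q ->
  hit H q (pfx (proj1_sig x) n) (cx H q x n) = false.
have [N1 HN1] : exists N, forall i n, (i < J)%N -> (N <= n)%N -> P i n.
  apply: fin_common => i _.
  case: (pselect (exists q, pickle q = i /\ f x + e <= ratr q)) => [[q0 [pq0 hq0]]|nq].
    have [N HN] := ev_const (fun n => cxS H q0 x n) (bnd q0 hq0).
    exists N => n hn q pq hq.
    have -> : q = q0 by apply: (pcan_inj pickleK); rewrite pq pq0.
    exact: HN.
  by exists 0%N => n _ q pq hq; exfalso; apply: nq; exists q.
have hb := archi_boundP (normr_ge0 (f x + e)).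
set N2 := Num.Def.archi_bound _ in hb.
exists (maxn N1 N2) => n hn; rewrite uK_pfx.
have hdef : - n%:R <= f x + e.
  have h3 : N2%:R <= n%:R :> R by rewrite ler_nat (leq_trans (leq_maxr _ _) hn).
  have h1 : - (f x + e) <= `|f x + e| by rewrite -normrN ler_norm.
  lra.
case hs: (sched n) => [q|] //.
case hcd: (cond _ _ _ _) => //.
rewrite leNgt; apply/negP => lt.
have hh : hit H q (pfx (proj1_sig x) n) (cx H q x n).
  by rewrite /hit size_pfx hs eqxx hcd.
have := hitc q n (ltW lt) hh => hJ.
have := HN1 (pickle q) n ltac:(lia) (leq_trans (leq_maxl _ _) hn) q erefl (ltW lt).
by rewrite hh.
Qed.

Lemma K_lower (A : countType) (T : set (seq A)) (R : realType) (H : nat -> branch T -> R)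
  (f : branch T -> R) : (forall m, lsc (H m)) ->
  (forall m x, H m.+1 x <= H m x) -> (forall x, H ^~ x @ \oo --> f x) ->
  forall x q, ratr q < f x -> forall B, exists n, (B <= n)%N /\
    uK H (pfx (proj1_sig x) n) = ratr q.
Proof.
move=> hl hd hc x q hq.
have hf m : f x <= H m x := dec_ge (fun k => hd k x) (hc x) m.
have condev c : exists M, forall n, (M <= n)%N -> cond H q (pickle q + c) (pfx (proj1_sig x) n).
  have hx : ratr q < H (pickle q + c)%N x by apply: lt_le_trans hq (hf _).
  have [N HN] := cyl_open_to (hl (pickle q + c)%N (ratr q)) hx.
  exists N => n hn; apply/asboolP => y; rewrite size_pfx => e.
  exact: (HN y (pfx_le hn e)).
have act B0 : exists n, (B0 <= n)%N /\ sched n = Some q.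
  have gi : injective (fun m : nat => pickle (q, m)).
    by move=> m1 m2 /(pcan_inj pickleK) [].
  have [m hm] := inj_unbounded gi B0.
  by exists (pickle (q, m)); split => //; rewrite /sched pickleK.
have infhit B0 : exists n, (B0 <= n)%N /\ hit H q (pfx (proj1_sig x) n) (cx H q x n).
  case: (pselect (exists n, (B0 <= n)%N /\ hit H q (pfx (proj1_sig x) n) (cx H q x n))) => // nh.
  exfalso.
  have const n : (B0 <= n)%N -> cx H q x n = cx H q x B0.
    elim: n => [|n IH]; first by rewrite leqn0 => /eqP ->.
    rewrite leq_eqVlt => /orP[/eqP <- //|]; rewrite ltnS => hn.
    have hf' : hit H q (pfx (proj1_sig x) n) (cx H q x n) = false.
      by apply/negbTE/negP => hh; apply: nh; exists n.
    by rewrite cxS hf' addn0 IH.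
  have [M HM] := condev (cx H q x B0).
  have [n [hn hs]] := act (maxn B0 M).
  apply: nh; exists n; split; first by rewrite (leq_trans (leq_maxl _ _) hn).
  rewrite /hit size_pfx hs eqxx /= const ?HM //.
    by rewrite (leq_trans (leq_maxr _ _) hn).
  by rewrite (leq_trans (leq_maxl _ _) hn).
move=> B; have [n [hn hh]] := infhit B; exists n; split => //.
rewrite uK_pfx; move: hh; rewrite /hit size_pfx => /andP[/eqP -> hc'].
by rewrite hc'.
Qed.

Lemma lsc_dec_limsup (A : countType) (T : set (seq A)) (R : realType)
  (H : nat -> branch T -> R) (f : branch T -> R) : (forall m, lsc (H m)) ->
  (forall m x, H m.+1 x <= H m x) -> (forall x, H ^~ x @ \oo --> f x) ->
  limsup_fun f.
Proof.
move=> hl hd hc; exists (uK H) => x.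
pose v := fun t : nat => (uK H (pfx (proj1_sig x) t.+1))%:E.
rewrite -/v limn_esup_lim; apply: cvg_lim => //.
suff <- : ereal_inf (range (esups v)) = (f x)%:E by exact: cvg_esups_inf.
apply/eqP; rewrite eq_le; apply/andP; split.
  apply/lee_addgt0Pr => e e0.
  have [N HN] := K_upper hd hc x e0.
  have h1 : (ereal_inf (range (esups v)) <= esups v N)%E.
    by apply: ereal_inf_lbound; exists N.
  apply: (le_trans h1); apply: ge_ereal_sup => _ [j /= hj <-].
  by rewrite /v lee_fin; apply: HN; rewrite (leq_trans hj).
apply: le_ereal_inf_tmp => _ [n _ <-].
apply/lee_subgt0Pr => e e0.
have : f x - e < f x by lra.
move/rat_in_itvoo => [q]; rewrite in_itv /= => /andP[h1 h2].
have [m [hm he]] := K_lower hl hd hc h2 n.+1.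
case: m hm he => [//|j] hm he.
have hv : (v j <= esups v n)%E by apply: ereal_sup_ubound; exists j.
apply: le_trans hv; rewrite /v he -EFinB lee_fin; lra.
Qed.


Theorem mainTheorem3 (R : realType) (A : countType) (hA : inhabited A)
    (T : set (seq A)) (hT : is_tree T) (hP : is_pruned T) :
  let L := [set f : branch T -> R | limsup_fun f] in
  [/\ (forall f : branch T -> R, lsc f -> L f),
      closed_dec_limits L
    & forall C : set (branch T -> R),
        (forall f : branch T -> R, lsc f -> C f) ->
        closed_dec_limits C -> L `<=` C].
Proof.
move=> L; split.
- move=> f hf; apply: (@lsc_dec_limsup _ _ _ (fun _ => f)) => // x.
  exact: cvg_cst.
- move=> g f hg gd gc.
  have [h hh] := choice (fun n => limsup_approx (hg n)).
  have hl n k : lsc (h n k) by case: (hh n).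
  have hd n k x : h n k.+1 x <= h n k x by case: (hh n).
  have hc n x : h n ^~ x @ \oo --> g n x by case: (hh n).
  have [H [Hl Hd Hc]] := diag hl hd hc gd gc.
  exact: (lsc_dec_limsup Hl Hd Hc).
- move=> C hC cC f Lf.
  have [h [hl hd hc]] := limsup_approx Lf.
  exact: (cC h f (fun k => hC _ (hl k)) hd hc).
Qed.
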